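(* Let $(B_a)_{a\in A}$ be a polynomial and let $S:=\sum_{a\in A}\mathcal P(B_a)$. Suppose $(X,t)$ is an algebra for $(B_a)_{a\in A}$ satisfying all image preserving equations with variable set $S$, i.e. for all $a,c\in A$, all $l:B_a\to S$, $r:B_c\to S$ with equal images, and all $k:S\to X$, one has $t(a,k\circ l)=t(c,k\circ r)$. Then there is a unique homomorphism (class function) $h:H((B_a)_{a\in A})\to X$, i.e. a unique class function with $h(\{f(b)\mid b\in B_a\})=t(a,h\circ f)$ for all $a\in A$ and $f:B_a\to H((B_a)_{a\in A})$.
   Context: Work in $\mathbf{ZF}$. A polynomial is a set $A$ with a family of sets $(B_a)_{a\in A}$. An algebra for it is a set $X$ with a function $t:\sum_{a\in A}X^{B_a}\to X$; a homomorphism $(X,s)\to(Y,t)$ is a (class) function $h$ with $h(s(a,f))=t(a,h\circ f)$ for all $a\in A$, $f:B_a\to X$; the same definitions apply to classes with class functions. A set $X$ is small relative to $(B_a)_{a\in A}$ if there are $a\in A$ and a surjection $B_a\to X$; it is hereditarily small if it is small and all its elements are hereditarily small. $H((B_a)_{a\in A})$ is the class of hereditarily small sets, with algebra structure $s(a,f):=\{f(b)\mid b\in B_a\}$. *)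

(* Defs.v *)
(* A model of ZF set theory given as a structure on a Rocq type:
   the class of all sets is the type [V]; classes are Rocq predicates on [V];
   class functions are Rocq functions [V -> V] (considered on their domain class).
   Separation, replacement and foundation (as epsilon-induction) are stated for
   arbitrary Rocq predicates/functions, so every class we use is available. *)

Record ZF := {
  V :> Type;
  mem : V -> V -> Prop;
  emp : V;
  upair : V -> V -> V;
  union : V -> V;
  power : V -> V;
  sep : (V -> Prop) -> V -> V;
  repl : (V -> V) -> V -> V;
  ext_ax : forall x y, (forall z, mem z x <-> mem z y) -> x = y;
  emp_ax : forall z, ~ mem z emp;
  upair_ax : forall x y z, mem z (upair x y) <-> z = x \/ z = y;
  union_ax : forall x z, mem z (union x) <-> exists y, mem y x /\ mem z y;
  power_ax : forall x z, mem z (power x) <-> (forall w, mem w z -> mem w x);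
  sep_ax : forall (P : V -> Prop) x z, mem z (sep P x) <-> mem z x /\ P z;
  repl_ax : forall (F : V -> V) x z, mem z (repl F x) <-> exists y, mem y x /\ z = F y;
  inf_ax : exists w, mem emp w /\
             forall x, mem x w -> mem (union (upair x (upair x x))) w;
  found_ax : forall P : V -> Prop,
      (forall x, (forall y, mem y x -> P y) -> P x) -> forall x, P x
}.

Arguments mem {z} _ _ : rename.
Arguments emp {z} : rename.
Arguments upair {z} _ _ : rename.
Arguments union {z} _ : rename.
Arguments power {z} _ : rename.
Arguments sep {z} _ _ : rename.
Arguments repl {z} _ _ : rename.

Section Defs.
Variable M : ZF.

Definition opair (x y : M) : M := upair (upair x x) (upair x y).

Definition graph (D : M) (f : M -> M) : M := repl (fun b => opair b (f b)) D.

Definition maps_into (D : M) (f : M -> M) (C : M -> Prop) : Prop :=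
  forall b, mem b D -> C (f b).

Definition sigma_power (A : M) (B : M -> M) : M :=
  union (repl (fun a => repl (fun P => opair a P) (power (B a))) A).

Definition small (A : M) (B : M -> M) (X : M) : Prop :=
  exists a, mem a A /\ exists f : M -> M,
    maps_into (B a) f (fun x => mem x X) /\
    (forall x, mem x X -> exists b, mem b (B a) /\ f b = x).

Inductive HS (A : M) (B : M -> M) : M -> Prop :=
| HS_intro : forall x, small A B x -> (forall y, mem y x -> HS A B y) -> HS A B x.

Definition s_H (B : M -> M) (a : M) (f : M -> M) : M := repl f (B a).

End Defs.

Arguments opair {M} _ _.
Arguments graph {M} _ _.
Arguments maps_into {M} _ _ _.
Arguments sigma_power {M} _ _.
Arguments small {M} _ _ _.
Arguments HS {M} _ _ _.
Arguments s_H {M} _ _ _.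

(* Main.v *)
Require Import Defs.
From Stdlib Require Import Classical ClassicalEpsilon Setoid.

Section Hom.
Variable M : ZF.

Lemma opair_inj2 (a u v : M) : opair a u = opair a v -> u = v.
Proof.
  unfold opair; intro E.
  assert (Hv : mem (upair a v) (upair (upair a a) (upair a u))).
  { rewrite E. apply upair_ax. right; reflexivity. }
  apply upair_ax in Hv. destruct Hv as [Hv|Hv].
  - assert (va : v = a).
    { assert (H : mem v (upair a a)) by (rewrite <- Hv; apply upair_ax; right; reflexivity).
      apply upair_ax in H; tauto. }
    subst v.
    assert (Hu : mem (upair a u) (upair (upair a a) (upair a a))).
    { rewrite <- E. apply upair_ax. right; reflexivity. }
    assert (Hu2 : upair a u = upair a a) by (apply upair_ax in Hu; tauto).
    assert (H : mem u (upair a a)) by (rewrite <- Hu2; apply upair_ax; right; reflexivity).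
    apply upair_ax in H; tauto.
  - assert (H : mem v (upair a u)) by (rewrite <- Hv; apply upair_ax; right; reflexivity).
    apply upair_ax in H. destruct H as [H|H]; [|auto].
    subst v.
    assert (H : mem u (upair a a)) by (rewrite Hv; apply upair_ax; right; reflexivity).
    apply upair_ax in H; tauto.
Qed.

Lemma graph_ext (D : M) f g : (forall b, mem b D -> f b = g b) -> graph D f = graph D g.
Proof.
  intro E; apply ext_ax; intro z; unfold graph; rewrite !repl_ax; split;
    intros [y [Hy ->]]; exists y; split; auto; rewrite (E y Hy); reflexivity.
Qed.

Variables (A : M) (B : M -> M) (X : M) (t : M -> M -> M).
Hypothesis ht : forall a f, mem a A -> maps_into (B a) f (fun x => mem x X) ->
          mem (t a (graph (B a) f)) X.
Hypothesis heq : forall a c (l r k : M -> M), mem a A -> mem c A ->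
          maps_into (B a) l (fun x => mem x (sigma_power A B)) ->
          maps_into (B c) r (fun x => mem x (sigma_power A B)) ->
          (forall z, (exists b, mem b (B a) /\ l b = z) <->
                     (exists b, mem b (B c) /\ r b = z)) ->
          maps_into (sigma_power A B) k (fun x => mem x X) ->
          t a (graph (B a) (fun b => k (l b))) = t c (graph (B c) (fun b => k (r b))).

Lemma key a c f f' (phi : M -> M) : mem a A -> mem c A ->
  repl f (B a) = repl f' (B c) ->
  (forall y, mem y (repl f (B a)) -> mem (phi y) X) ->
  t a (graph (B a) (fun b => phi (f b))) = t c (graph (B c) (fun d => phi (f' d))).
Proof.
  intros Ha Hc Ex Hphi.
  set (x := repl f (B a)) in *.
  assert (Hx0 : exists x0, mem x0 X).
  { destruct (classic (exists b, mem b (B a))) as [[b Hb]|Hn].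
    - exists (phi (f b)). apply Hphi. apply repl_ax. eauto.
    - exists (t a (graph (B a) (fun _ => emp))). apply ht; auto.
      intros b Hb; exfalso; eauto. }
  destruct Hx0 as [x0 Hx0].
  set (P := fun y => sep (fun b => f b = y) (B a)).
  set (l := fun b => opair a (P (f b))).
  set (r := fun d => opair a (P (f' d))).
  set (Q := fun s v => (exists y, mem y x /\ s = opair a (P y) /\ v = phi y) \/
                       (~ (exists y, mem y x /\ s = opair a (P y)) /\ v = x0)).
  set (k := fun s => epsilon (inhabits x0) (Q s)).
  assert (kQ : forall s, Q s (k s)).
  { intro s. apply epsilon_spec.
    destruct (classic (exists y, mem y x /\ s = opair a (P y))) as [[y [Hy Hs]]|Hn].
    - exists (phi y). left. eauto.
    - exists x0. right. auto. }
  assert (Pinj : forall y y', mem y x -> P y = P y' -> y = y').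
  { intros y y' Hy E. unfold x in Hy. apply repl_ax in Hy. destruct Hy as [b [Hb ->]].
    assert (H : mem b (P (f b))) by (unfold P; apply sep_ax; auto).
    rewrite E in H. unfold P in H. apply sep_ax in H. tauto. }
  assert (kval : forall y, mem y x -> k (opair a (P y)) = phi y).
  { intros y Hy. destruct (kQ (opair a (P y))) as [[y' [Hy' [Hs Hv]]]|[Hn _]].
    - rewrite Hv. apply opair_inj2 in Hs. f_equal. symmetry. apply Pinj; auto.
    - exfalso; eauto. }
  assert (kX : forall s, mem (k s) X).
  { intro s. destruct (kQ s) as [[y [Hy [_ ->]]]|[_ ->]]; auto. }
  assert (fx : forall b, mem b (B a) -> mem (f b) x).
  { intros b Hb. unfold x. apply repl_ax. eauto. }
  assert (f'x : forall d, mem d (B c) -> mem (f' d) x).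
  { intros d Hd. rewrite Ex. apply repl_ax. eauto. }
  assert (lS : forall y, mem y x -> mem (opair a (P y)) (sigma_power A B)).
  { intros y Hy. unfold sigma_power. apply union_ax.
    exists (repl (fun P0 => opair a P0) (power (B a))). split.
    - apply repl_ax. exists a; split; auto.
    - apply repl_ax. exists (P y). split; auto. apply power_ax. intros w Hw.
      unfold P in Hw. apply sep_ax in Hw. tauto. }
  transitivity (t a (graph (B a) (fun b => k (l b)))).
  { f_equal. apply graph_ext. intros b Hb. unfold l. rewrite kval; auto. }
  transitivity (t c (graph (B c) (fun d => k (r d)))).
  2: { f_equal. apply graph_ext. intros d Hd. unfold r. rewrite kval; auto. }
  apply heq; auto.
  - intros b Hb. unfold l. apply lS; auto.
  - intros d Hd. unfold r. apply lS; auto.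
  - intro z; split; intros [b [Hb <-]].
    + assert (H : mem (f b) (repl f' (B c))) by (rewrite <- Ex; auto).
      apply repl_ax in H. destruct H as [d [Hd E]].
      exists d. split; auto. unfold l, r. rewrite E. reflexivity.
    + assert (H : mem (f' b) x) by auto.
      unfold x in H. apply repl_ax in H. destruct H as [d [Hd E]].
      exists d. split; auto. unfold l, r. rewrite E. reflexivity.
  - intros s _. apply kX.
Qed.

Inductive G : M -> M -> Prop :=
| G_intro : forall a f g, mem a A -> (forall b, mem b (B a) -> G (f b) (g b)) ->
    G (s_H B a f) (t a (graph (B a) g)).

Lemma G_X : forall x v, G x v -> mem v X.
Proof.
  intros x v HG; induction HG as [a f g Ha HG IH]. apply ht; auto.
Qed.

Definition hh (y : M) : M := epsilon (inhabits (@emp M)) (G y).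

Lemma hh_spec y v : G y v -> G y (hh y).
Proof. intro H. unfold hh. apply epsilon_spec. eauto. Qed.

Lemma G_unique : forall x v, G x v -> forall v', G x v' -> v = v'.
Proof.
  induction 1 as [a f g Ha HG IH]. intros v' HG'.
  remember (s_H B a f) as x eqn:Ex. destruct HG' as [c f' g' Hc HG2].
  unfold s_H in Ex.
  assert (hgf : forall b, mem b (B a) -> g b = hh (f b)).
  { intros b Hb. apply IH; auto. eapply hh_spec; eauto. }
  rewrite (graph_ext (B a) g (fun b => hh (f b))) by auto.
  rewrite (graph_ext (B c) g' (fun d => hh (f' d))).
  - apply key; auto.
    intros y Hy. apply repl_ax in Hy. destruct Hy as [b [Hb ->]].
    apply (G_X (f b)). eapply hh_spec; eauto.
  - intros d Hd.
    assert (H : mem (f' d) (repl f (B a))) by (rewrite <- Ex; apply repl_ax; eauto).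
    apply repl_ax in H. destruct H as [b [Hb E]].
    pose proof (HG2 d Hd) as H2. rewrite E in H2.
    rewrite E, <- hgf by auto. symmetry. apply IH; auto.
Qed.

Lemma G_exists : forall x, HS A B x -> exists v, G x v.
Proof.
  apply (found_ax M (fun x => HS A B x -> exists v, G x v)).
  intros x IH Hx. destruct Hx as [x Hs Hel].
  destruct Hs as [a [Ha [f [Hf Hsurj]]]].
  assert (Ex : x = s_H B a f).
  { apply ext_ax; intro z; unfold s_H; rewrite repl_ax; split.
    - intro Hz. destruct (Hsurj z Hz) as [b [Hb E]]. exists b; auto.
    - intros [b [Hb ->]]; apply Hf; auto. }
  exists (t a (graph (B a) (fun b => hh (f b)))). rewrite Ex. constructor; auto.
  intros b Hb. destruct (IH (f b) (Hf b Hb) (Hel _ (Hf b Hb))) as [v Hv].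
  eapply hh_spec; eauto.
Qed.

Lemma hh_hom a f : mem a A -> maps_into (B a) f (HS A B) ->
  hh (s_H B a f) = t a (graph (B a) (fun b => hh (f b))).
Proof.
  intros Ha Hf.
  assert (HG : G (s_H B a f) (t a (graph (B a) (fun b => hh (f b))))).
  { constructor; auto. intros b Hb. destruct (G_exists (f b) (Hf b Hb)) as [v Hv].
    eapply hh_spec; eauto. }
  symmetry. apply (G_unique _ _ HG). eapply hh_spec; eauto.
Qed.

Lemma main_sec :
  exists h : M -> M,
    (forall x, HS A B x -> mem (h x) X) /\
    (forall a f, mem a A -> maps_into (B a) f (HS A B) ->
       h (s_H B a f) = t a (graph (B a) (fun b => h (f b)))) /\
    (forall h' : M -> M,
       (forall x, HS A B x -> mem (h' x) X) ->
       (forall a f, mem a A -> maps_into (B a) f (HS A B) ->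
          h' (s_H B a f) = t a (graph (B a) (fun b => h' (f b)))) ->
       forall x, HS A B x -> h' x = h x).
Proof.
  exists hh. split; [|split].
  - intros x Hx. destruct (G_exists x Hx) as [v Hv]. apply (G_X x).
    eapply hh_spec; eauto.
  - apply hh_hom.
  - intros h' _ Hh'.
    apply (found_ax M (fun x => HS A B x -> h' x = hh x)).
    intros x IH Hx. destruct Hx as [x Hs Hel].
    destruct Hs as [a [Ha [f [Hf Hsurj]]]].
    assert (Ex : x = s_H B a f).
    { apply ext_ax; intro z; unfold s_H; rewrite repl_ax; split.
      - intro Hz. destruct (Hsurj z Hz) as [b [Hb E]]. exists b; auto.
      - intros [b [Hb ->]]; apply Hf; auto. }
    assert (HfS : maps_into (B a) f (HS A B)) by (intros b Hb; apply Hel; apply Hf; auto).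
    rewrite Ex, Hh', hh_hom by auto. f_equal. apply graph_ext. intros b Hb.
    apply IH; [apply Hf; auto | apply Hel; apply Hf; auto].
Qed.

End Hom.

Theorem mainTheorem3 (M : ZF) (A : M) (B : M -> M) (X : M) (t : M -> M -> M)
  (* (X, t) is an algebra: t : sum_{a in A} X^{B_a} -> X *)
  (ht : forall a f, mem a A -> maps_into (B a) f (fun x => mem x X) ->
          mem (t a (graph (B a) f)) X)
  (* all image preserving equations with variable set S = sum_{a} P(B_a) hold *)
  (heq : forall a c (l r k : M -> M), mem a A -> mem c A ->
          maps_into (B a) l (fun x => mem x (sigma_power A B)) ->
          maps_into (B c) r (fun x => mem x (sigma_power A B)) ->
          (forall z, (exists b, mem b (B a) /\ l b = z) <->
                     (exists b, mem b (B c) /\ r b = z)) ->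
          maps_into (sigma_power A B) k (fun x => mem x X) ->
          t a (graph (B a) (fun b => k (l b))) = t c (graph (B c) (fun b => k (r b)))) :
  exists h : M -> M,
    (forall x, HS A B x -> mem (h x) X) /\
    (forall a f, mem a A -> maps_into (B a) f (HS A B) ->
       h (s_H B a f) = t a (graph (B a) (fun b => h (f b)))) /\
    (forall h' : M -> M,
       (forall x, HS A B x -> mem (h' x) X) ->
       (forall a f, mem a A -> maps_into (B a) f (HS A B) ->
          h' (s_H B a f) = t a (graph (B a) (fun b => h' (f b)))) ->
       forall x, HS A B x -> h' x = h x).
Proof.
  exact (main_sec M A B X t ht heq).
Qed.
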